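(* Consider the multi-agent system $\dot{x}_i=Ax_i+Bu_i$, $i=1,\dots,N$, with $x_i\in\mathbb{R}^n$, $u_i\in\mathbb{R}^m$, $A\in\mathbb{R}^{n\times n}$, $B\in\mathbb{R}^{n\times m}$. The communication topology is a weighted directed graph $\mathcal{G}=(V,E,W)$, $V=\{1,\dots,N\}$, with adjacency matrix $W=[w_{ij}]$, $w_{ij}\ge 0$ and $w_{ij}>0$ iff $(j,i)\in E$ (agent $j$ sends information to agent $i$). Suppose $\mathcal{G}$ has a directed spanning tree $\mathcal{T}$ with root node $N$, in which each node $i\in\{1,\dots,N-1\}$ has unique parent $k_i$ with $(k_i,i)\in E$, and suppose the root node $N$ of $\mathcal{T}$ is a root vertex in $\mathcal{G}$. Consider the protocol $$u_N=0,\qquad u_i=K_i\,w_{i,k_i}\,(x_{k_i}-x_i),\quad i=1,\dots,N-1,$$ with $K_i\in\mathbb{R}^{m\times n}$. If the gains $K_i$ are chosen such that $A-w_{i,k_i}BK_i$ is Hurwitz for each $i=1,\dots,N-1$, then the closed-loop system achieves asymptotic state consensus, i.e. $\lim_{t\to\infty}\|x_i(t)-x_j(t)\|=0$ for all $i,j\in\{1,\dots,N\}$ and all initial conditions $x_1(0),\dots,x_N(0)\in\mathbb{R}^n$.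
   Context: A matrix is Hurwitz if all its eigenvalues have negative real part. A directed spanning tree of $\mathcal{G}$ rooted at $N$ is a subgraph using edges of $\mathcal{G}$ containing a unique directed path from $N$ to every other vertex. A root vertex of $\mathcal{G}$ is a vertex from which there is a directed path to every other vertex. *)

(* Defs.v *)
From mathcomp Require Import all_boot all_order all_algebra.
From mathcomp Require Import all_classical all_reals all_analysis.
From mathcomp Require Import complex.
Set Implicit Arguments. Unset Strict Implicit. Unset Printing Implicit Defensive.
Import Order.TTheory GRing.Theory Num.Theory.
Local Open Scope ring_scope.

Definition hurwitz (R : realType) (n : nat) (M : 'M[R]_n) : Prop :=
  forall z : R[i], eigenvalue (map_mx (fun r : R => (r%:C)%C) M) z -> complex.Re z < 0.

(* Weighted digraph on vertices 'I_N given by its adjacency matrix W: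
   (j, i) is an edge (j sends to i) iff 0 < W i j. *)
Definition edge (R : realType) (N : nat) (W : 'M[R]_N) : rel 'I_N :=
  fun j i => 0 < W i j.

Definition root_vertex (R : realType) (N : nat) (W : 'M[R]_N) (r : 'I_N) : Prop :=
  forall i, connect (edge W) r i.

(* par encodes a directed spanning tree of G rooted at r: every non-root
   vertex i has the unique parent par i, the edge (par i, i) is an edge of G,
   and following parents from any vertex reaches r (no cycles), so that there
   is a unique tree path from r to every vertex. (par r is irrelevant.) *)
Definition spanning_tree_parent (R : realType) (N : nat) (W : 'M[R]_N)
    (r : 'I_N) (par : 'I_N -> 'I_N) : Prop :=
  (forall i, i != r -> edge W (par i) i) /\
  (forall i, exists k : nat, iter k par i = r).

Definition protocol (R : realType) (N n m : nat) (W : 'M[R]_N) (r : 'I_N)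
    (par : 'I_N -> 'I_N) (K : 'I_N -> 'M[R]_(m, n)) (x : 'I_N -> 'cV[R]_n)
    (i : 'I_N) : 'cV[R]_m :=
  if i == r then 0 else W i (par i) *: (K i *m (x (par i) - x i)).

(* Main.v *)
Require Import Defs.
From mathcomp Require Import all_boot all_order all_algebra.
From mathcomp Require Import all_classical all_reals all_analysis.
From mathcomp Require Import complex.
From mathcomp Require Import ring lra.
Import Order.TTheory GRing.Theory Num.Theory.
Import numFieldNormedType.Exports.
Local Open Scope classical_set_scope.
Local Open Scope ring_scope.

Lemma is_derive_expc (R : realType) (c t : R) : is_derive t 1 (fun s => expR (c * s)) (expR (c * t) * c).
Proof.
have -> : (fun s => expR (c * s)) = expR \o (fun s => c * s) by [].
apply: is_derive1_comp.
have H : is_derive t (1:R) ((cst c : R -> R) * id) (cst c t *: (1:R) + t *: (0:R)).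
  by apply: is_deriveM.
have -> : (fun s : R => c * s) = (cst c : R -> R) * id by apply/funext.

eapply is_derive_eq; [exact H|].
by rewrite /GRing.scale /= mulr1 mulr0 addr0.
Qed.

Lemma der_cont (R : realType) (f df : R -> R) : (forall t : R, is_derive t (1:R) f (df t)) -> forall x : R, {for x, continuous f}.
Proof.
move=> H t; apply: differentiable_continuous; apply/derivable1_diffP; exact: ex_derive.
Qed.

Lemma decay (R : realType) (V dV e : R -> R) (c : R) : 0 < c ->
  (forall t : R, is_derive t (1:R) V (dV t)) -> (forall t, 0 <= V t) ->
  (forall t, dV t <= - c * V t + e t) ->
  e t @[t --> +oo] --> 0 -> V t @[t --> +oo] --> 0.
Proof.
move=> c0 dVt V0 dVle he.
apply/cvgr0Pnorm_lt => eps eps0.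
have ce0 : 0 < c * eps / 2 by rewrite divr_gt0 ?mulr_gt0.
have [T0 [_ HT0]] := cvgr0_norm_lt e he _ ce0.
pose T := T0 + 1.
have TT0 : T0 < T by rewrite /T ltrDl.
pose Z t := expR (c * t) * (V t - eps / 2).
pose dZ t := expR (c * t) * (dV t) + (V t - eps / 2) * (expR (c * t) * c).
have dZt (t : R) : is_derive t (1:R) Z (dZ t).
  rewrite /Z /dZ.
  have -> : (fun t => expR (c * t) * (V t - eps / 2)) =
     (fun s => expR (c * s)) * (fun s => V s - eps / 2) by [].
  eapply is_derive_eq; [eapply is_deriveM; [exact: is_derive_expc| ]|].
    eapply is_derive_eq; [eapply is_deriveB; [exact: dVt|exact: is_derive_cst]|reflexivity].
  by rewrite /GRing.scale /= subr0.
have dZle t : T0 < t -> dZ t <= 0.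
  move=> /HT0 het; rewrite /dZ.
  have -> : expR (c * t) * dV t + (V t - eps / 2) * (expR (c * t) * c)
     = expR (c * t) * (dV t + c * V t - c * eps / 2) by rewrite /=; ring.
  rewrite pmulr_rle0 ?expR_gt0 //.
  have h1 := dVle t; have h2 := ler_norm (e t).
  rewrite subr_le0; rewrite /= in het; lra.
have ZZ t : T <= t -> Z t <= Z T.
  rewrite le_eqVlt => /orP [/eqP -> //| Tt].
  have [x xin HZ] : exists2 x, x \in `]T, t[%R & Z t - Z T = dZ x * (t - T).
    apply: (MVT Tt).
    by apply: continuous_subspaceT => y; exact (der_cont _ _ _ dZt y).
  move: xin; rewrite in_itv /= => /andP [Tx xt].
  rewrite -subr_le0 HZ; apply: mulr_le0_ge0; first by apply: dZle; apply: lt_trans Tx.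
  by rewrite subr_ge0 ltW.
have ce1 : 0 < c * eps by rewrite mulr_gt0.
exists (T + (2 * `|V T|) / (c * eps)); split; first by rewrite num_real.
move=> t Mt.
have Tt : T <= t.
  apply: le_trans (ltW Mt); rewrite lerDl; apply: divr_ge0.
    by rewrite mulr_ge0.
  by rewrite ltW.
have h1 : 2 * `|V T| < (t - T) * (c * eps).
  by rewrite -ltr_pdivrMr // ltrBrDl.
have := ZZ t Tt; rewrite /Z.
have -> : c * t = c * T + c * (t - T) by ring.
rewrite expRD -mulrA ler_pM2l ?expR_gt0 //.
have h2 := expR_ge1Dx (c * (t - T)).
have h3 := ler_norm (V T).
have h4 := V0 t.
rewrite ger0_norm //.
set E := expR _ in h2 *.
move=> h5.
rewrite ltNge; apply/negP => h6.
have p1 : 0 <= E * (V t - eps) by rewrite mulr_ge0 ?expR_ge0 // subr_ge0.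
have p2 : 0 <= (E - 1 - c * (t - T)) * eps.
  by apply: mulr_ge0; [lra | rewrite ltW].
nra.
Qed.

Lemma sq_cvg0 (R : realType) (a V : R -> R) : (forall t, a t ^+ 2 <= V t) ->
  V t @[t --> +oo] --> 0 -> a t @[t --> +oo] --> 0.
Proof.
move=> aV hV; apply/cvgr0Pnorm_lt => eps eps0.
have e2 : 0 < eps ^+ 2 by rewrite exprn_gt0.
apply: filterS (cvgr0_norm_lt V hV _ e2) => t h.
rewrite ltNge; apply/negP => h2.
have h3 := real_normK (num_real (a t)).
have h4 := aV t.
have h5 := ler_norm (V t).
have h6 : 0 <= (`|a t| - eps) * (`|a t| + eps).
  apply: mulr_ge0; first by rewrite subr_ge0.
  by apply: addr_ge0; [exact: normr_ge0 | exact: ltW].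
nra.
Qed.

Lemma osc2 (R : realType) (a b p q : R -> R) (al be : R) : al < 0 ->
  (forall t : R, is_derive t (1:R) a (al * a t - be * b t + p t)) ->
  (forall t : R, is_derive t (1:R) b (be * a t + al * b t + q t)) ->
  p t @[t --> +oo] --> 0 -> q t @[t --> +oo] --> 0 ->
  a t @[t --> +oo] --> 0 /\ b t @[t --> +oo] --> 0.
Proof.
move=> al0 da db hp hq.
pose c := - al.
have c0 : 0 < c by rewrite /c oppr_gt0.
pose V t := a t ^+ 2 + b t ^+ 2.
pose dV t := 2 * a t * (al * a t - be * b t + p t) + 2 * b t * (be * a t + al * b t + q t).
pose e t := (p t ^+ 2 + q t ^+ 2) / c.
have dVt (t : R) : is_derive t (1:R) V (dV t).
  rewrite /V /dV.
  have -> : (fun t => a t ^+ 2 + b t ^+ 2) = a ^+ 2 + b ^+ 2 by [].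
  eapply is_derive_eq; [eapply is_deriveD; eapply is_deriveX; [exact: da| exact: db]|].
  by rewrite /GRing.scale /= /=; ring.
have V0 t : 0 <= V t by rewrite /V addr_ge0 // sqr_ge0.
have dVle t : dV t <= - c * V t + e t.
  rewrite -(ler_pM2r c0) /e /= [X in _ <= X]mulrDl divfK ?gt_eqF // /dV /V /c.
  have h1 := sqr_ge0 (c * a t - p t).
  have h2 := sqr_ge0 (c * b t - q t).
  rewrite /c in h1 h2. nra.
have he : e t @[t --> +oo] --> 0.
  have -> : e = (fun t => (p t * p t + q t * q t) * c^-1).
    by apply/funext => t; rewrite /e !expr2.
  rewrite -[X in _ --> X](mul0r c^-1).
  apply: cvgM; last exact: cvg_cst.
  rewrite -[X in _ --> X](addr0 0).
  apply: cvgD; rewrite -[X in _ --> X](mulr0 0); exact: cvgM.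
have hV := decay R V dV e c c0 dVt V0 dVle he.
split.
  by apply: (sq_cvg0 R _ V) => // t; rewrite /V lerDl sqr_ge0.
by apply: (sq_cvg0 R _ V) => // t; rewrite /V lerDr sqr_ge0.
Qed.

Lemma is_derive_entry (R : realType) p q (F : R -> 'M[R]_(p, q)) (t : R) v a b :
  is_derive t (1:R) F v -> is_derive t (1:R) (fun s => F s a b) (v a b).
Proof.
move=> dF.
have H : (fun h : R => h^-1 *: ((F \o shift t) (h *: 1) - F t)) @ 0^' --> v.
  rewrite -(@derive_val _ _ _ _ _ _ _ dF); exact: (@ex_derive _ _ _ _ _ _ _ dF).
have H2 : (fun h : R => h^-1 *: (((fun s => F s a b) \o shift t) (h *: 1) - F t a b)) @ 0^' --> v a b.
  have := cvg_comp _ _ H (@coord_continuous R p q a b v).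
  apply: cvg_trans; apply: near_eq_cvg; near=> h.
  by rewrite /= !mxE.
split; first by apply/cvg_ex; exists (v a b).
exact: cvg_lim.
Unshelve. all: end_near.
Qed.

Lemma ReM_real (R : realType) (x : R[i]) (r : R) : complex.Re (x * r%:C)%C = complex.Re x * r.
Proof. by case: x => a b; rewrite /= mulr0 subr0. Qed.
Lemma ImM_real (R : realType) (x : R[i]) (r : R) : complex.Im (x * r%:C)%C = complex.Im x * r.
Proof. by case: x => a b; rewrite /= mulr0 add0r. Qed.
Lemma ReD (R : realType) (x y : R[i]) : complex.Re (x + y) = complex.Re x + complex.Re y.
Proof. by case: x => a b; case: y. Qed.
Lemma ImD (R : realType) (x y : R[i]) : complex.Im (x + y) = complex.Im x + complex.Im y.
Proof. by case: x => a b; case: y. Qed.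
Lemma ReM (R : realType) (x y : R[i]) : complex.Re (x * y) = complex.Re x * complex.Re y - complex.Im x * complex.Im y.
Proof. by case: x => a b; case: y. Qed.
Lemma ImM (R : realType) (x y : R[i]) : complex.Im (x * y) = complex.Re x * complex.Im y + complex.Im x * complex.Re y.
Proof. by case: x => a b; case: y => c d /=; rewrite addrC. Qed.
Lemma Re_sum (R : realType) n (F : 'I_n -> R[i]) : complex.Re (\sum_j F j) = \sum_j complex.Re (F j).
Proof. by elim/big_ind2: _ => // x1 x2 y1 y2 <- <-; rewrite ReD. Qed.
Lemma Im_sum (R : realType) n (F : 'I_n -> R[i]) : complex.Im (\sum_j F j) = \sum_j complex.Im (F j).
Proof. by elim/big_ind2: _ => // x1 x2 y1 y2 <- <-; rewrite ImD. Qed.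

Definition cz (R : realType) (u : R -> R[i]) :=
  complex.Re (u t) @[t --> +oo] --> (0:R) /\ complex.Im (u t) @[t --> +oo] --> (0:R).
Arguments cz {R} u.

Lemma cvg0_add (R : realType) (f g : R -> R) : f t @[t --> +oo] --> (0:R) ->
  g t @[t --> +oo] --> (0:R) -> (f t + g t) @[t --> +oo] --> (0:R).
Proof. by move=> hf hg; rewrite -[X in _ --> X](addr0 0); exact: cvgD. Qed.

Lemma cvg0_scal (R : realType) (c : R) (f : R -> R) : f t @[t --> +oo] --> (0:R) ->
  (c * f t) @[t --> +oo] --> (0:R).
Proof. by move=> hf; rewrite -[X in _ --> X](mulr0 c); apply: cvgM => //; exact: cvg_cst. Qed.

Lemma cvg0_sum (R : realType) n (f : 'I_n -> R -> R) :
  (forall l, f l t @[t --> +oo] --> (0:R)) -> (\sum_l f l t) @[t --> +oo] --> (0:R).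
Proof.
elim: n f => [|n IH] f hf.
  have -> : (fun t : R => \sum_(l < 0) f l t) = (fun=> 0) by apply/funext => t; rewrite big_ord0.
  exact: cvg_cst.
have -> : (fun t : R => \sum_(l < n.+1) f l t) =
   (fun t => \sum_(l < n) f (widen_ord (leqnSn n) l) t + f ord_max t).
  by apply/funext => t; rewrite big_ord_recr.
apply: cvg0_add => //; exact: IH.
Qed.

Lemma cz_add (R : realType) (u v : R -> R[i]) : cz u -> cz v -> cz (fun t => u t + v t).
Proof.
move=> [hu1 hu2] [hv1 hv2]; split.
  have -> : (fun t => complex.Re (u t + v t)) = (fun t => complex.Re (u t) + complex.Re (v t)).
    by apply/funext => t; rewrite ReD.
  exact: cvg0_add.
have -> : (fun t => complex.Im (u t + v t)) = (fun t => complex.Im (u t) + complex.Im (v t)).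
  by apply/funext => t; rewrite ImD.
exact: cvg0_add.
Qed.

Lemma cz_mulc (R : realType) (c : R[i]) (u : R -> R[i]) : cz u -> cz (fun t => c * u t).
Proof.
move=> [hu1 hu2]; split.
  have -> : (fun t => complex.Re (c * u t)) =
    (fun t => complex.Re c * complex.Re (u t) + (- complex.Im c) * complex.Im (u t)).
    by apply/funext => t; rewrite ReM mulNr.
  by apply: cvg0_add; apply: cvg0_scal.
have -> : (fun t => complex.Im (c * u t)) =
  (fun t => complex.Re c * complex.Im (u t) + complex.Im c * complex.Re (u t)).
  by apply/funext => t; rewrite ImM.
by apply: cvg0_add; apply: cvg0_scal.
Qed.

Lemma cz_sum (R : realType) n (u : 'I_n -> R -> R[i]) :
  (forall l, cz (u l)) -> cz (fun t => \sum_l u l t).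
Proof.
move=> hu; split.
  have -> : (fun t => complex.Re (\sum_l u l t)) = (fun t => \sum_l complex.Re (u l t)).
    by apply/funext => t; rewrite Re_sum.
  by apply: cvg0_sum => l; case: (hu l).
have -> : (fun t => complex.Im (\sum_l u l t)) = (fun t => \sum_l complex.Im (u l t)).
  by apply/funext => t; rewrite Im_sum.
by apply: cvg0_sum => l; case: (hu l).
Qed.

Lemma cz_real (R : realType) (r : R -> R) : r t @[t --> +oo] --> (0:R) ->
  cz (fun t => (r t)%:C%C).
Proof. by move=> hr; split => //=; exact: cvg_cst. Qed.

Lemma cz_0 (R : realType) : cz (fun _ : R => 0 : R[i]).
Proof. by split => /=; exact: cvg_cst. Qed.

Lemma is_derive_lin (R : realType) n (c : 'I_n -> R) (g : 'I_n -> R -> R) (dg : 'I_n -> R) (t : R) :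
  (forall j, is_derive t (1:R) (g j) (dg j)) ->
  is_derive t (1:R) (fun s => \sum_j c j * g j s) (\sum_j c j * dg j).
Proof.
move=> hg.
have H : is_derive t (1:R) (\sum_j (c j \*: g j)) (\sum_j c j *: dg j).
  by apply: is_derive_sum => j; apply: is_deriveZ.
have -> : (fun s => \sum_j c j * g j s) = \sum_j (c j \*: g j).
  by rewrite fct_sumE; apply/funext => s.
exact H.
Qed.

Lemma ReP (R : realType) p q (Q : 'M[R[i]]_(p, q)) k (w : 'I_q -> R) :
  complex.Re ((Q *m \col_j (w j)%:C%C) k 0) = \sum_j complex.Re (Q k j) * w j.
Proof. by rewrite mxE Re_sum; apply: eq_bigr => j _; rewrite mxE ReM_real. Qed.
Lemma ImP (R : realType) p q (Q : 'M[R[i]]_(p, q)) k (w : 'I_q -> R) :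
  complex.Im ((Q *m \col_j (w j)%:C%C) k 0) = \sum_j complex.Im (Q k j) * w j.
Proof. by rewrite mxE Im_sum; apply: eq_bigr => j _; rewrite mxE ImM_real. Qed.

Lemma hurwitz_stable (R : realType) n (M : 'M[R]_n) (y f : 'I_n -> R -> R) :
  hurwitz M ->
  (forall i (t : R), is_derive t (1:R) (y i) (\sum_j M i j * y j t + f i t)) ->
  (forall i, f i t @[t --> +oo] --> (0:R)) ->
  forall i, y i t @[t --> +oo] --> (0:R).
Proof.
case: n M y f => [|n] M y f hM dy hf i; first by case: i.
pose Mc := map_mx (fun r : R => (r%:C)%C) M.
have [P Pu Ptrig] := Schur Mc (ltn0Sn n).
have Punit : P \in unitmx := unitarymx_unit Pu.
pose T := P *m Mc *m invmx P.
have Ttrig : is_trig_mx T by move: Ptrig; rewrite /similar_to /conjmx pinvmxE.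
have TP : T *m P = P *m Mc by rewrite /T -mulmxA mulVmx // mulmx1.
have Teig k : complex.Re (T k k) < 0.
  apply: hM.
  have : eigenvalue T (T k k).
    rewrite eigenvalue_root_char char_poly_trig // rootE horner_prod (bigD1 k) //=.
    by rewrite hornerXsubC subrr mul0r.
  move/eigenvalueP => [v vT vn0].
  apply/eigenvalueP; exists (v *m P).
    by rewrite -mulmxA -TP mulmxA vT scalemxAl.
  by rewrite mulmx_free_eq0 ?row_free_unit.
pose yc t := \col_j ((y j t)%:C%C : R[i]).
pose fc t := \col_j ((f j t)%:C%C : R[i]).
pose zc t := P *m yc t.
pose z (k : 'I_n.+1) (t : R) : R[i] := zc t k 0.
pose dy' j t := \sum_l M j l * y l t + f j t.
pose dz t := P *m \col_j ((dy' j t)%:C%C : R[i]).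
pose h k t := dz t k 0 - T k k * z k t.
have dzE t : dz t = T *m zc t + P *m fc t.
  rewrite /dz /zc mulmxA TP -mulmxA -mulmxDr; congr (_ *m _).
  apply/colP => j; rewrite !mxE /dy' rmorphD rmorph_sum /=; congr (_ + _).
  by apply: eq_bigr => l _; rewrite !mxE rmorphM.
have hE k t : h k t = \sum_(l < n.+1) (if (l < k)%N then T k l * z l t else 0) + (P *m fc t) k 0.
  rewrite /h dzE [X in X - _]mxE [X in X + _ - _]mxE (bigD1 k) //= [in RHS](bigD1 k) //= ltnn add0r.
  have E (a b c : R[i]) : a + b + c - a = b + c by ring.
  change (zc t k 0) with (z k t); rewrite E; congr (_ + _); apply: eq_bigr => l lk.
  case: ltnP => // kl.
  have kl' : (k < l)%N by rewrite ltn_neqAle kl andbT eq_sym.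
  by move/is_trig_mxP: Ttrig => -> //; rewrite mul0r.
have dRe k (t : R) : is_derive t (1:R) (fun s => complex.Re (z k s)) (complex.Re (dz t k 0)).
  have -> : (fun s => complex.Re (z k s)) = (fun s => \sum_j complex.Re (P k j) * y j s).
    by apply/funext => s; rewrite /z /zc /yc ReP.
  rewrite /dz ReP; apply: is_derive_lin => j; exact: dy.
have dIm k (t : R) : is_derive t (1:R) (fun s => complex.Im (z k s)) (complex.Im (dz t k 0)).
  have -> : (fun s => complex.Im (z k s)) = (fun s => \sum_j complex.Im (P k j) * y j s).
    by apply/funext => s; rewrite /z /zc /yc ImP.
  rewrite /dz ImP; apply: is_derive_lin => j; exact: dy.
have dzk k t : dz t k 0 = T k k * z k t + h k t by rewrite /h addrC subrK.
have claim : forall m (k : 'I_n.+1), (k < m)%N -> cz (z k).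
  elim=> [|m IH] k //; rewrite ltnS leq_eqVlt => /orP [/eqP km | km]; last exact: IH.
  have hh : cz (h k).
    have -> : h k = (fun t => \sum_(l < n.+1) (if (l < k)%N then T k l * z l t else 0)
                       + \sum_j P k j * (f j t)%:C%C).
      apply/funext => t; rewrite hE; congr (_ + _); rewrite mxE; apply: eq_bigr => j _.
      by rewrite mxE.
    apply: cz_add.
      apply: (@cz_sum R n.+1 (fun l t => if (l < k)%N then T k l * z l t else 0)) => l.
      case: ltnP => lk; last exact: cz_0.
      by apply: cz_mulc; apply: IH; rewrite -km.
    apply: (@cz_sum R n.+1 (fun j t => P k j * (f j t)%:C%C)) => j.
    by apply: cz_mulc; apply: cz_real; exact: hf.
  have [hp hq] := hh.
  have da : forall t : R, is_derive t (1:R) (fun s => complex.Re (z k s))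
     (complex.Re (T k k) * complex.Re (z k t) - complex.Im (T k k) * complex.Im (z k t)
       + complex.Re (h k t)).
    by move=> t; apply: (is_derive_eq (dRe k t)); rewrite dzk ReD ReM.
  have db : forall t : R, is_derive t (1:R) (fun s => complex.Im (z k s))
     (complex.Im (T k k) * complex.Re (z k t) + complex.Re (T k k) * complex.Im (z k t)
       + complex.Im (h k t)).
    by move=> t; apply: (is_derive_eq (dIm k t)); rewrite dzk ImD ImM [X in X + _ = _]addrC.
  have [ha hb] := osc2 R (fun s => complex.Re (z k s)) (fun s => complex.Im (z k s))
    (fun s => complex.Re (h k s)) (fun s => complex.Im (h k s))
    (complex.Re (T k k)) (complex.Im (T k k)) (Teig k) da db hp hq.
  by split.
have : cz (fun t => \sum_l invmx P i l * z l t).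
  apply: (@cz_sum R n.+1 (fun l t => invmx P i l * z l t)) => l.
  by apply: cz_mulc; apply: (claim n.+1).
case=> H _.
have -> : (fun t => y i t) = (fun t => complex.Re (\sum_l invmx P i l * z l t)).
  apply/funext => t.
  have E : complex.Re (yc t i 0) = complex.Re ((invmx P *m zc t) i 0) by rewrite /zc mulKmx.
  rewrite [in LHS]mxE [in RHS]mxE /= in E; exact: E.
exact: H.
Qed.

Lemma zid (V : zmodType) (a b p q s : V) : a + (p - q) - b = (a - b) - (q - s) + (p - s).
Proof. by rewrite addrAC opprB -[RHS]addrA; congr (_ + _); rewrite addrC addrA subrK. Qed.

Lemma norm_le_sum (R : realType) n (v : 'cV[R]_n) : `|v| <= \sum_a `|v a 0|.
Proof.
have S0 : 0 <= \sum_a `|v a 0| by apply: sumr_ge0 => a _.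
change (mx_norm v <= \sum_a `|v a 0|).
rewrite mx_normrE; elim/big_ind: _ => //.
  by move=> u1 u2 h1 h2; rewrite ge_max h1 h2.
move=> [a b] _ /=; rewrite (ord1 b) (bigD1 a) //= lerDl.
by apply: sumr_ge0 => c _.
Qed.

Lemma cvg0_norm (R : realType) (g : R -> R) : g t @[t --> +oo] --> (0:R) ->
  `|g t| @[t --> +oo] --> (0:R).
Proof.
move=> hg; apply/cvgr0Pnorm_lt => eps eps0.
by apply: filterS (cvgr0_norm_lt g hg _ eps0) => t; rewrite normr_id.
Qed.

Lemma cvg_vec0 (R : realType) n (v : R -> 'cV[R]_n) :
  (forall a, v t a 0 @[t --> +oo] --> (0:R)) -> `|v t| @[t --> +oo] --> (0:R).
Proof.
move=> hv.
have hS : (\sum_a `|v t a 0|) @[t --> +oo] --> (0:R).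
  by apply: cvg0_sum => a; apply: cvg0_norm.
apply/cvgr0Pnorm_lt => eps eps0.
apply: filterS (cvgr0_norm_lt _ hS _ eps0) => t h.
rewrite normr_id; apply: le_lt_trans (norm_le_sum _ _ _) _.
by apply: le_lt_trans (ler_norm _) h.
Qed.

Lemma zid2 (V : zmodType) (a b p q s : V) : a + (p - q) - b = (a - q) - (b - s) + (p - s).
Proof. by rewrite opprB -[RHS]addrA [(s - b) + _]addrC [(p - s) + _]addrA subrK -!addrA; congr (_ + _); exact: addrCA. Qed.

Theorem theorem2 (R : realType) (N n m : nat)
    (A : 'M[R]_n) (B : 'M[R]_(n, m)) (W : 'M[R]_N.+1)
    (par : 'I_N.+1 -> 'I_N.+1) (K : 'I_N.+1 -> 'M[R]_(m, n)) :
  (forall i j, 0 <= W i j) ->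
  spanning_tree_parent W ord_max par ->
  root_vertex W ord_max ->
  (forall i : 'I_N.+1, i != ord_max -> hurwitz (A - W i (par i) *: (B *m K i))) ->
  forall x : 'I_N.+1 -> R -> 'cV[R]_n,
    (forall (i : 'I_N.+1) (t : R),
        is_derive t (1 : R) (x i)
          (A *m x i t + B *m protocol W ord_max par K (fun j => x j t) i)) ->
    forall i j : 'I_N.+1, `|x i t - x j t| @[t --> +oo] --> 0.
Proof.
move=> _ [_ hpar] _ hH x dx.
pose r : 'I_N.+1 := ord_max.
pose d k t := x k t - x r t.
have dd k (t : R) : is_derive t (1:R) (d k) ((A *m x k t + B *m protocol W r par K (fun j => x j t) k)
    - (A *m x r t + B *m protocol W r par K (fun j => x j t) r)).
  exact: is_deriveB.
have base a : d r t a 0 @[t --> +oo] --> (0:R).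
  have -> : (fun t => d r t a 0) = (fun=> 0) by apply/funext => t; rewrite /d subrr mxE.
  exact: cvg_cst.
have claim : forall p k, iter p par k = r -> forall a, d k t a 0 @[t --> +oo] --> (0:R).
  elim=> [|p IH] k.
    by move=> /= ->; exact: base.
  rewrite iterSr => /IH hp a.
  have [kr|kr] := eqVneq k r; first by rewrite kr; exact: base.
  pose w := W k (par k).
  pose Mk := A - w *: (B *m K k).
  pose BK := w *: (B *m K k).
  pose f b t := (BK *m d (par k) t) b 0.
  have hf b : f b t @[t --> +oo] --> (0:R).
    have -> : (fun t => f b t) = (fun t => \sum_c BK b c * d (par k) t c 0).
      by apply/funext => t; rewrite /f mxE.
    by apply: cvg0_sum => c; apply: cvg0_scal; exact: hp.
  have hdk b (t : R) : is_derive t (1:R) (fun s => d k s b 0) (\sum_c Mk b c * d k t c 0 + f b t).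
    apply: (is_derive_eq (is_derive_entry _ _ _ _ _ _ b 0 (dd k t))).
    have E : (A *m x k t + B *m protocol W r par K (fun j => x j t) k)
        - (A *m x r t + B *m protocol W r par K (fun j => x j t) r)
        = Mk *m d k t + BK *m d (par k) t.
      rewrite /protocol (negbTE kr) eqxx mulmx0 addr0 /Mk /BK /d /w.
      rewrite -scalemxAr mulmxA -scalemxAl.
      rewrite !mulmxBr !mulmxBl.
      rewrite -!scalemxAl !scalerBr; exact: zid2.
    by rewrite E mxE [X in X + _]mxE.
  exact: (hurwitz_stable R n Mk (fun b s => d k s b 0) f (hH k kr) hdk hf a).
move=> i j.
apply: cvg_vec0 => a.
have -> : (fun t => (x i t - x j t) a 0) = (fun t => d i t a 0 - d j t a 0).
  by apply/funext => t; rewrite /d !mxE opprB addrA subrK.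
have [pi hpi] := hpar i; have [pj hpj] := hpar j.
rewrite -[X in _ --> X]subr0; apply: cvgB; [exact: claim hpi a | exact: claim hpj a].
Qed.
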